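(* Fix integers $k_1,k_2$ with $-1\le k_1\le k_2$ and $g\ge 4k_1+3$. Suppose $\overline{x}=(x_1,\ldots,x_{2k_1+1})\in\{1,2,3\}^{2k_1+1}$ satisfies: (1) whenever $i_1,i_2,i_3\in[1,2k_1+1]$ satisfy $i_1+i_2=i_3$, we have $(x_{i_1},x_{i_2},x_{i_3})\ne(1,1,3)$; (2) $a(\overline{x})+b(\overline{x})-c(\overline{x})=2k_1+1-k_2$; (3) $a(\overline{x})+2b(\overline{x})\le k_1+1$. Then the number of numerical semigroups $S$ with $g(S)=g$, $m(S)=g-k_1$, $e(S)=g-k_2$, and whose Kunz coordinate vector with respect to $m=m(S)$ has first $2k_1+1$ coordinates equal to $\overline{x}$, is \[\binom{g-3k_1-2}{k_1+1-a(\overline{x})-2b(\overline{x})}.\]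
   Context: A numerical semigroup $S$ is a submonoid of $\mathbb{N}_0$ with finite complement; $g(S)$ is the size of the complement, $m(S)$ the smallest nonzero element, $e(S)$ the size of the minimal generating set $(S\setminus\{0\})\setminus((S\setminus\{0\})+(S\setminus\{0\}))$. For $m=m(S)$, the Apéry set $\{s\in S: s-m\notin S\}$ contains exactly one element $a_i$ in each residue class $i$ mod $m$; writing $a_i=k_im+i$ for $1\le i\le m-1$, the Kunz coordinate vector of $S$ with respect to $m$ is $(k_1,\ldots,k_{m-1})$. For $\overline{x}=(x_1,\ldots,x_t)\in\{1,2,3\}^t$: $a(\overline{x})=\#\{i: x_i=2\}$, $b(\overline{x})=\#\{i: x_i=3\}$, $c(\overline{x})=\#\{i\in[1,t]: \exists j_1,j_2\in[1,t],\ j_1+j_2=i,\ (x_{j_1},x_{j_2},x_i)=(1,1,2)\}$. *)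

(* Defs.v *)
From mathcomp Require Import all_boot all_order all_algebra.
Set Implicit Arguments. Unset Strict Implicit. Unset Printing Implicit Defensive.
Import Order.TTheory GRing.Theory Num.Theory.

Definition is_numsg (S : nat -> bool) : Prop :=
  [/\ S 0, (forall a b, S a -> S b -> S (a + b)) & exists B, forall n, B <= n -> S n].

Definition genus_is (S : nat -> bool) (g : nat) : Prop :=
  exists B, (forall n, B <= n -> S n) /\ count (fun n => ~~ S n) (iota 0 B) = g.

Definition multiplicity_is (S : nat -> bool) (m : nat) : Prop :=
  [/\ 0 < m, S m & forall n, 0 < n < m -> ~~ S n].

Definition mingen (S : nat -> bool) (n : nat) : bool :=
  [&& S n, 0 < n & ~~ has (fun a => S a && S (n - a)) (iota 1 n.-1)].

Definition edim_is (S : nat -> bool) (e : nat) : Prop :=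
  exists B, (forall n, B <= n -> ~~ mingen S n) /\ count (mingen S) (iota 0 B) = e.

(* Apery set of S w.r.t. m: s in S with s - m not in S (s - m < 0 counts as not in S). *)
Definition apery (S : nat -> bool) (m n : nat) : bool :=
  S n && ((n < m) || ~~ S (n - m)).

Definition kunz_coord_is (S : nat -> bool) (m i k : nat) : bool :=
  apery S m (k * m + i).

Definition xi (x : seq nat) (i : nat) : nat := nth 0 x i.-1.

Definition a_of (x : seq nat) : nat := count (fun v => v == 2) x.
Definition b_of (x : seq nat) : nat := count (fun v => v == 3) x.
Definition c_of (x : seq nat) : nat :=
  let t := size x in
  count (fun i => (xi x i == 2) &&
           has (fun j1 => has (fun j2 => [&& j1 + j2 == i, xi x j1 == 1 & xi x j2 == 1])
                              (iota 1 t)) (iota 1 t))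
        (iota 1 t).

Definition num_sat (P : (nat -> bool) -> Prop) (N : nat) : Prop :=
  exists f : 'I_N -> (nat -> bool),
    [/\ forall i, P (f i),
        forall i j, f i =1 f j -> i = j &
        forall S, P S -> exists i, f i =1 S].

(* Main.v *)
Require Import Defs.
From mathcomp Require Import all_boot all_order all_algebra zify.
Set Implicit Arguments. Unset Strict Implicit. Unset Printing Implicit Defensive.


Lemma count_sum (T : Type) (p : pred T) (s : seq T) : count p s = \sum_(v <- s) p v.
Proof. elim: s => [|y s IH]; by rewrite ?big_nil ?big_cons //= IH. Qed.

Lemma count_iota_sum (p : pred nat) a n : count p (iota a n) = \sum_(a <= i < a + n) p i.
Proof. by rewrite count_sum /index_iota addnC addnK. Qed.

Definition Sk (m : nat) (kv : nat -> nat) (p : nat) : bool := kv (p %% m) <= p %/ m.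

Lemma Sk_qj m kv q j : j < m -> Sk m kv (q * m + j) = (kv j <= q).
Proof.
move=> jm; have m0 : 0 < m by lia.
by rewrite /Sk modnMDl modn_small // divnMDl // divn_small // addn0.
Qed.

Lemma count_reindex (p : pred nat) m Q :
  count p (iota 0 (Q * m)) = \sum_(0 <= i < m) count (fun q => p (q * m + i)) (iota 0 Q).
Proof.
elim: Q => [|Q IH]; first by rewrite mul0n /= big1.
rewrite mulSn addnC iotaD count_cat IH add0n.
under [in RHS]eq_bigr => i _ do rewrite -addn1 iotaD count_cat /= addn0.
rewrite big_split /=; congr (_ + _).
rewrite count_iota_sum. idtac.
rewrite -{1}(add0n (Q * m)) big_addn addKn; apply: congr_big_nat => // i _; by rewrite add0n addnC.
Qed.

Lemma count_lt w Q : w <= Q -> count (fun q => ~~ (w <= q)) (iota 0 Q) = w.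
Proof.
move=> wQ; rewrite -(subnKC wQ) iotaD count_cat add0n.
rewrite (eq_in_count (a2 := predT)); last by move=> q; rewrite mem_iota /=; lia.
rewrite count_predT size_iota (eq_in_count (a2 := pred0)); last by move=> q; rewrite mem_iota /=; lia.
by rewrite count_pred0 addn0.
Qed.


Lemma Sk_numsg m kv : 0 < m -> kv 0 = 0 ->
  (forall j, 0 < j < m -> 1 <= kv j) -> (forall j, j < m -> kv j <= 3) ->
  (forall j l, 0 < j -> 0 < l -> j + l < m -> kv (j + l) <= kv j + kv l) ->
  is_numsg (Sk m kv).
Proof.
move=> m0 k0 k1 k3 kin; split.
- by rewrite /Sk mod0n k0.
- move=> p q; rewrite /Sk => Hp Hq.
  have ej := divn_eq p m; have eq := divn_eq q m.
  have jm : p %% m < m by rewrite ltn_mod.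
  have lm : q %% m < m by rewrite ltn_mod.
  set j := p %% m in Hp ej jm *; set l := q %% m in Hq eq lm *.
  set P := p %/ m in Hp ej *; set Q := q %/ m in Hq eq *.
  case: (ltnP (j + l) m) => hjl.
  + have -> : p + q = (P + Q) * m + (j + l) by lia.
    rewrite -/(Sk m kv _) Sk_qj //.
    case: (posnP j) => [->|jp]; first by rewrite add0n; lia.
    case: (posnP l) => [->|lp]; first by rewrite addn0; lia.
    have := kin j l jp lp hjl; lia.
  + have -> : p + q = (P + Q + 1) * m + (j + l - m) by lia.
    rewrite -/(Sk m kv _) Sk_qj; last by lia.
    have := k3 (j + l - m); have := k1 j; have := k1 l; lia.
- exists (4 * m) => p hp; rewrite /Sk.
  have : 4 <= p %/ m by rewrite -(mulnK 4 m0) leq_div2r.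
  have := k3 (p %% m); rewrite ltn_mod m0; lia.
Qed.

Lemma count_gaps m kv Q : 0 < m -> (forall j, j < m -> kv j <= Q) ->
  count (fun p => ~~ Sk m kv p) (iota 0 (Q * m)) = \sum_(0 <= i < m) kv i.
Proof.
move=> m0 kQ; rewrite count_reindex; apply: eq_big_nat => i /andP[_ im].
rewrite (eq_count (a2 := fun q => ~~ (kv i <= q))) ?count_lt ?kQ // => q /=.
by rewrite Sk_qj.
Qed.

Lemma Sk_genus m kv : 0 < m -> (forall j, j < m -> kv j <= 3) ->
  genus_is (Sk m kv) (\sum_(0 <= i < m) kv i).
Proof.
move=> m0 k3; exists (4 * m); split; last first.
  by rewrite -(count_gaps (Q := 4)) // => j /k3; lia.
move=> p hp; rewrite /Sk.
have : 4 <= p %/ m by rewrite -(mulnK 4 m0) leq_div2r.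
have := k3 (p %% m); rewrite ltn_mod m0; lia.
Qed.

Lemma Sk_mult m kv : 0 < m -> kv 0 = 0 -> (forall j, 0 < j < m -> 1 <= kv j) ->
  multiplicity_is (Sk m kv) m.
Proof.
move=> m0 k0 k1; split => //.
  by have := Sk_qj kv 1 m0; rewrite mul1n addn0 k0.
move=> p hp; rewrite -[p]add0n -(mul0n m) Sk_qj; last by lia.
have := k1 p hp; lia.
Qed.

Lemma mg_notS (S : nat -> bool) p : ~~ S p -> ~~ mingen S p.
Proof. by rewrite /mingen; case: (S p). Qed.

Lemma mg_dec (S : nat -> bool) p a : 0 < a < p -> S a -> S (p - a) -> ~~ mingen S p.
Proof.
move=> hap Sa Sb; rewrite /mingen; apply/negP => /and3P[_ _ /hasPn H].
have : a \in iota 1 p.-1 by rewrite mem_iota; lia.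
by move/H; rewrite Sa Sb.
Qed.

Lemma Sk_ge_m m kv p : (forall j, 0 < j < m -> 1 <= kv j) -> Sk m kv p -> 0 < p -> m <= p.
Proof.
move=> k1 Sp p0; case: (ltnP p m) => // pm.
move: Sp; rewrite -[p]add0n -(mul0n m) Sk_qj // => h.
have := k1 p; lia.
Qed.

Lemma mg_dec_inv (S : nat -> bool) p a : mingen S p -> 0 < a < p -> S a -> S (p - a) -> False.
Proof. by move=> h ha Sa Sb; move: (mg_dec ha Sa Sb); rewrite h. Qed.


Section MG.
Variables (m : nat) (kv : nat -> nat).
Hypothesis m0 : 0 < m.
Hypothesis k0 : kv 0 = 0.
Hypothesis k1 : forall j, 0 < j < m -> 1 <= kv j.

Local Notation S := (Sk m kv).

Lemma S_qj q j : j < m -> S (q * m + j) = (kv j <= q).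
Proof. exact: Sk_qj. Qed.

Lemma S_m : S m.
Proof. by have := Sk_qj kv 1 m0; rewrite mul1n addn0 k0. Qed.

Lemma mg_off q i : i < m -> q != kv i -> (0 < i) || (1 < q) -> ~~ mingen S (q * m + i).
Proof.
move=> im; case: (ltngtP q (kv i)) => // h _ hq.
  by apply: mg_notS; rewrite S_qj //; lia.
case: q h hq => [|q'] // h hq.
have pos : 0 < q' -> 0 < q' * m by rewrite muln_gt0 m0 andbT.
apply: (mg_dec (a := m)); first by rewrite mulSn; lia.
  exact: S_m.
have -> : q'.+1 * m + i - m = q' * m + i by rewrite mulSn; lia.
rewrite S_qj //; lia.
Qed.

Lemma mg_m : mingen S m.
Proof.
rewrite /mingen S_m m0 /=; apply/hasPn => a; rewrite mem_iota => ha.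
apply/negP => /andP[Sa _]; have := Sk_ge_m k1 Sa; lia.
Qed.

Lemma mg_res0 : count (fun q => mingen S (q * m + 0)) (iota 0 4) = 1.
Proof.
rewrite /= !addn0 mul0n mul1n.
have -> : mingen S 0 = false by rewrite /mingen /= andbF.
rewrite mg_m. idtac.
have -> : mingen S (2 * m) = false.
  apply/negbTE; have := mg_off (q := 2) m0; rewrite k0 addn0; apply => //.
have -> : mingen S (3 * m) = false.
  apply/negbTE; have := mg_off (q := 3) m0; rewrite k0 addn0; apply => //.
by [].
Qed.

Lemma mg_res i : 0 < i < m -> kv i <= 3 ->
  count (fun q => mingen S (q * m + i)) (iota 0 4) = mingen S (kv i * m + i).
Proof.
move=> hi k3; have im : i < m by lia.
have off q : q != kv i -> mingen S (q * m + i) = false.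
  by move=> h; apply/negbTE/mg_off => //; lia.
have := k1 hi; case E: (kv i) k3 => [|[|[|[|k]]]] // _ _ /=.
- rewrite (off 0) ?E // (off 2) ?E // (off 3) ?E //=; by case: (mingen _ _).
- rewrite (off 0) ?E // (off 1) ?E // (off 3) ?E //=; by case: (mingen _ _).
- rewrite (off 0) ?E // (off 1) ?E // (off 2) ?E //=; by case: (mingen _ _).
Qed.

Lemma mg1 i : 0 < i < m -> kv i = 1 -> mingen S (1 * m + i).
Proof.
move=> hi ki; rewrite /mingen S_qj ?ki //; last by lia.
apply/and3P; split => //; first by lia.
apply/hasPn => a; rewrite mem_iota => ha; apply/negP => /andP[Sa Sb].
have := Sk_ge_m k1 Sa; have := Sk_ge_m k1 Sb; lia.
Qed.

Lemma mg2 i : 0 < i < m -> kv i = 2 ->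
  mingen S (2 * m + i) = ~~ has (fun j => (kv j == 1) && (kv (i - j) == 1)) (iota 1 i.-1).
Proof.
move=> hi ki; apply/idP/idP.
  move=> H; apply/hasPn => j; rewrite mem_iota => hj; apply/negP => /andP[/eqP a /eqP b].
  apply: (mg_dec_inv (a := 1 * m + j) H); first by lia.
    by rewrite S_qj ?a //; lia.
  have -> : 2 * m + i - (1 * m + j) = 1 * m + (i - j) by lia.
  by rewrite S_qj ?b //; lia.
move=> /hasPn H; rewrite /mingen S_qj ?ki //; last by lia.
apply/and3P; split => //; first by lia.
apply/hasPn => a; rewrite mem_iota => ha; apply/negP => /andP[Sa Sb].
have ma := Sk_ge_m k1 Sa; have mb := Sk_ge_m k1 Sb.
have hb : 0 < 2 * m + i - a by lia.
have {}ma := ma (ltac:(lia)); have {}mb := mb hb.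
case: (posnP (a - m)) => j0.
  move: Sb; have -> : 2 * m + i - a = 1 * m + i by lia.
  rewrite S_qj ?ki //; lia.
case: (ltnP (a - m) i) => ji; last first.
  move: Sa; have -> : a = 1 * m + i by lia.
  rewrite S_qj ?ki //; lia.
have hj1 : kv (a - m) = 1.
  move: Sa; have {1}-> : a = 1 * m + (a - m) by lia.
  rewrite S_qj; last by lia.
  have := k1 (j := a - m); lia.
have hj2 : kv (i - (a - m)) = 1.
  move: Sb; have -> : 2 * m + i - a = 1 * m + (i - (a - m)) by lia.
  rewrite S_qj; last by lia.
  have := k1 (j := i - (a - m)); lia.
have : a - m \in iota 1 i.-1 by rewrite mem_iota; lia.
by move/H; rewrite hj1 hj2.
Qed.

Lemma mg3_inv i : 0 < i < m -> mingen S (3 * m + i) ->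
  (forall j, 0 < j < i -> ~~ ((kv j == 1) && (kv (i - j) <= 2))) /\
  (forall j, i < j < m -> ~~ ((kv j == 1) && (kv (i + m - j) == 1))).
Proof.
move=> hi H; split => j hj; apply/negP => /andP[/eqP a b].
  apply: (mg_dec_inv (a := 1 * m + j) H); first by lia.
    by rewrite S_qj ?a //; lia.
  have -> : 3 * m + i - (1 * m + j) = 2 * m + (i - j) by lia.
  by rewrite S_qj //; lia.
apply: (mg_dec_inv (a := 1 * m + j) H); first by lia.
  by rewrite S_qj ?a //; lia.
have -> : 3 * m + i - (1 * m + j) = 1 * m + (i + m - j) by lia.
rewrite S_qj ?(eqP b) //; lia.
Qed.

End MG.


Lemma pair_lb (E : nat -> nat) lo hi c :
  (forall j, lo <= j < hi -> c <= E j + E (lo + hi - 1 - j)) ->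
  c * (hi - lo) <= 2 * \sum_(lo <= j < hi) E j.
Proof.
move=> H.
have rev : \sum_(lo <= j < hi) E (lo + hi - 1 - j) = \sum_(lo <= j < hi) E j.
  rewrite big_nat_rev; apply: eq_big_nat => j hj; congr E; lia.
rewrite mul2n -addnn {2}(_ : \sum_(lo <= j < hi) E j = \sum_(lo <= j < hi) E (lo + hi - 1 - j)) //.
rewrite -big_split /= mulnC -sum_nat_const_nat.
rewrite big_nat_cond [X in _ <= X]big_nat_cond; apply: leq_sum => j /andP[hj _]; exact: H.
Qed.


Lemma sum_xi (x : seq nat) (f : nat -> nat) :
  \sum_(1 <= i < (size x).+1) f (xi x i) = \sum_(v <- x) f v.
Proof.
rewrite big_add1 /= [in RHS](big_nth 0); apply: eq_big_nat => i _; by rewrite /xi.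
Qed.

Lemma a_cons v x : a_of (v :: x) = (v == 2) + a_of x. Proof. by []. Qed.
Lemma b_cons v x : b_of (v :: x) = (v == 3) + b_of x. Proof. by []. Qed.
Lemma a_nil : a_of [::] = 0. Proof. by []. Qed.
Lemma b_nil : b_of [::] = 0. Proof. by []. Qed.

Lemma sum_pred_x (x : seq nat) : all (fun v => 1 <= v <= 3) x ->
  \sum_(v <- x) v.-1 = a_of x + 2 * b_of x.
Proof.
elim: x => [|v x IH]; first by rewrite big_nil.
rewrite [all _ _]/=; move=> /andP[hv /IH {}IH]; rewrite big_cons IH a_cons b_cons.
move: (a_of x) (b_of x) => p q.
case/andP: hv; case: v => [|[|[|[|v]]]] //= _ _; lia.
Qed.

Lemma count_x123 (x : seq nat) : all (fun v => 1 <= v <= 3) x ->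
  count (pred1 1) x + a_of x + b_of x = size x.
Proof.
elim: x => [|v x IH] //; rewrite [all _ _]/=.
move=> /andP[hv /IH {}IH]; rewrite a_cons b_cons /=.
move: IH; move: (a_of x) (b_of x) (count _ x) => p q r.
case/andP: hv; case: v => [|[|[|[|v]]]] //= _ _; lia.
Qed.

Definition inA R (A : {set 'I_R}) (k : nat) : bool := [exists j in A, val j == k].

Lemma inA_ord R (A : {set 'I_R}) (j : 'I_R) : inA A j = (j \in A).
Proof.
apply/existsP/idP => [[j' /andP[hj /eqP e]]|hj]; last by exists j; rewrite hj eqxx.
by have <- : j' = j by apply: val_inj.
Qed.

Lemma sum_inA R (A : {set 'I_R}) : \sum_(0 <= k < R) inA A k = #|A|.
Proof.
rewrite big_mkord -sum1_card [in RHS]big_mkcond /=; apply: eq_bigr => j _.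
by rewrite inA_ord; case: (j \in A).
Qed.

Definition kvA (x : seq nat) (m : nat) R (A : {set 'I_R}) (i : nat) : nat :=
  if i == 0 then 0 else if i <= size x then xi x i
  else if i < m then (if inA A (i - (size x).+1) then 2 else 1) else 0.

Lemma sum_rem (x : seq nat) m R (A : {set 'I_R}) : R = m - 1 - size x -> size x < m ->
  \sum_((size x).+1 <= i < m) (kvA x m A i).-1 = #|A|.
Proof.
move=> eR tm; rewrite -sum_inA -{1}(add0n (size x).+1) big_addn.
have -> : m - (size x).+1 = R by lia.
apply: eq_big_nat => i hi; rewrite /kvA.
have -> : (i + (size x).+1 == 0) = false by lia.
have -> : (i + (size x).+1 <= size x) = false by lia.
have -> : i + (size x).+1 < m by lia.
rewrite addnK; by case: (inA A i).
Qed.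


Lemma sum_split3 (E : nat -> nat) m i : 0 < i < m ->
  \sum_(1 <= j < m) E j = \sum_(1 <= j < i) E j + E i + \sum_(i.+1 <= j < m) E j.
Proof.
move=> hi; rewrite (@big_cat_nat _ _ _ i.+1 1 m) /=; [|lia|lia].
rewrite (@big_cat_nat _ _ _ i 1 i.+1) /=; [|lia|lia].
by rewrite big_nat1.
Qed.

Section Generic.
Variables (m n : nat) (kv : nat -> nat).
Hypothesis m0 : 0 < m.
Hypothesis k0 : kv 0 = 0.
Hypothesis k1 : forall j, 0 < j < m -> 1 <= kv j.
Hypothesis k3 : forall j, j < m -> kv j <= 3.
Hypothesis TE : \sum_(1 <= j < m) (kv j).-1 = n.

Lemma PH2 i : 0 < i < m -> 2 <= kv i -> 2 * n <= i ->
  has (fun j => (kv j == 1) && (kv (i - j) == 1)) (iota 1 i.-1).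
Proof.
move=> hi h2 hn; apply/negPn/negP => /hasPn H.
have L := @pair_lb (fun j => (kv j).-1) 1 i 1.
have {L} : 1 * (i - 1) <= 2 * \sum_(1 <= j < i) (kv j).-1.
  apply: L => j hj.
  have -> : 1 + i - 1 - j = i - j by lia.
  have hj1 := k1 (j := j) (ltac:(lia)); have hj2 := k1 (j := i - j) (ltac:(lia)).
  have : j \in iota 1 i.-1 by rewrite mem_iota; lia.
  move/H/nandP => [/eqP|/eqP] hne; lia.
have := sum_split3 (fun j => (kv j).-1) hi; rewrite TE; lia.
Qed.

Lemma PH3 i : 0 < i < m -> kv i = 3 -> 2 * n <= m -> ~~ mingen (Sk m kv) (3 * m + i).
Proof.
move=> hi ki hm; apply/negP => H.
have [Ha Hb] := mg3_inv m0 k0 hi H.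
have La : 2 * (i - 1) <= 2 * \sum_(1 <= j < i) (kv j).-1.
  apply: (@pair_lb (fun j => (kv j).-1) 1 i 2) => j hj.
  have -> : 1 + i - 1 - j = i - j by lia.
  have := Ha j hj; have := Ha (i - j) (ltac:(lia)).
  have -> : i - (i - j) = j by lia.
  have hj1 := k1 (j := j) (ltac:(lia)); have hj2 := k1 (j := i - j) (ltac:(lia)).
  have hj3 := k3 (j := j) (ltac:(lia)); have hj4 := k3 (j := i - j) (ltac:(lia)).
  move=> /nandP [/eqP h1|h1] /nandP [/eqP h2|h2]; lia.
have Lb : 1 * (m - i.+1) <= 2 * \sum_(i.+1 <= j < m) (kv j).-1.
  apply: (@pair_lb (fun j => (kv j).-1) i.+1 m 1) => j hj.
  have -> : i.+1 + m - 1 - j = i + m - j by lia.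
  have hj1 := k1 (j := j) (ltac:(lia)); have hj2 := k1 (j := i + m - j) (ltac:(lia)).
  have := Hb j (ltac:(lia)); move=> /nandP [/eqP h1|/eqP h1]; lia.
have := sum_split3 (fun j => (kv j).-1) hi; rewrite TE ki; lia.
Qed.

End Generic.

Lemma edim_count m kv : 0 < m -> kv 0 = 0 -> (forall j, 0 < j < m -> 1 <= kv j) ->
  (forall j, j < m -> kv j <= 3) ->
  count (mingen (Sk m kv)) (iota 0 (4 * m)) = 1 + \sum_(1 <= i < m) mingen (Sk m kv) (kv i * m + i).
Proof.
move=> m0 k0 k1 k3; rewrite count_reindex big_ltn // mg_res0 //; congr (_ + _).
apply: eq_big_nat => i hi; have hi' : 0 < i < m by lia.
by rewrite mg_res // k3 //; lia.
Qed.

Lemma Sk_edim m kv e : 0 < m -> kv 0 = 0 -> (forall j, 0 < j < m -> 1 <= kv j) ->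
  (forall j, j < m -> kv j <= 3) ->
  e = 1 + \sum_(1 <= i < m) mingen (Sk m kv) (kv i * m + i) ->
  edim_is (Sk m kv) e.
Proof.
move=> m0 k0 k1 k3 ->; exists (4 * m); split; last by rewrite edim_count.
move=> p hp; apply: (mg_dec (a := m)); first by lia.
  exact: S_m.
rewrite /Sk.
have : 3 <= (p - m) %/ m by rewrite -(mulnK 3 m0) leq_div2r //; lia.
have := k3 ((p - m) %% m); rewrite ltn_mod m0; lia.
Qed.


Lemma xi_range (x : seq nat) i : all (fun v => 1 <= v <= 3) x -> 1 <= i <= size x ->
  1 <= xi x i <= 3.
Proof.
move=> /allP hx hi; apply: hx; rewrite /xi; apply: mem_nth; case: i hi => [|i] //= /andP[_].
Qed.

Section KVA.
Variables (n g : nat) (x : seq nat) (R : nat) (A : {set 'I_R}).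
Local Notation t := (size x).
Local Notation m := (g + 1 - n).
Hypothesis hg : 4 * n <= g + 1.
Hypothesis ht : size x = (2 * n).-1.
Hypothesis hx : all (fun v => 1 <= v <= 3) x.
Hypothesis h113 : forall i1 i2 i3 : nat, 1 <= i1 <= size x -> 1 <= i2 <= size x ->
     1 <= i3 <= size x -> i1 + i2 = i3 ->
     (xi x i1, xi x i2, xi x i3) <> (1, 1, 3).
Hypothesis hR : R = m - 1 - t.
Local Notation kv := (kvA x m A).

Lemma m0 : 0 < m. Proof. lia. Qed.
Lemma tm : t < m. Proof. lia. Qed.

Lemma kv0 : kv 0 = 0. Proof. by []. Qed.

Lemma kv_first i : 0 < i <= t -> kv i = xi x i.
Proof.
move=> hi; rewrite /kvA; case: ifP => [/eqP|_]; first lia.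
case: ifP => // h; lia.
Qed.

Lemma kv_rem i : t < i < m -> kv i = if inA A (i - t.+1) then 2 else 1.
Proof.
move=> hi; rewrite /kvA; case: ifP => [/eqP|_]; first lia.
case: ifP => h; first lia.
case: ifP => // h'; lia.
Qed.

Lemma kv1 j : 0 < j < m -> 1 <= kv j.
Proof.
move=> hj; case: (leqP j t) => hjt.
  rewrite kv_first; last by lia.
  have := xi_range (i := j) hx; lia.
rewrite kv_rem; last by lia.
by case: (inA _ _).
Qed.

Lemma kv3 j : j < m -> kv j <= 3.
Proof.
move=> hj; case: (posnP j) => [->//|j0].
case: (leqP j t) => hjt.
  rewrite kv_first; last by lia.
  have := xi_range (i := j) hx; lia.
rewrite kv_rem; last by lia.
by case: (inA _ _).
Qed.

Lemma kv_kunz j l : 0 < j -> 0 < l -> j + l < m -> kv (j + l) <= kv j + kv l.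
Proof.
move=> j0 l0 hjl.
have a := kv1 (j := j); have b := kv1 (j := l).
have {a b} := (a (ltac:(lia)), b (ltac:(lia))) => -[a b].
case: (leqP (j + l) t) => hjt; last first.
  rewrite kv_rem; last by lia.
  by case: (inA _ _); lia.
rewrite !kv_first; try lia.
have rj := xi_range (i := j) hx (ltac:(lia)).
have rl := xi_range (i := l) hx (ltac:(lia)).
have rs := xi_range (i := j + l) hx (ltac:(lia)).
have H := h113 (i1 := j) (i2 := l) (i3 := j + l) (ltac:(lia)) (ltac:(lia)) (ltac:(lia)) erefl.
move: rj rl rs H; case: (xi x j) => [|[|[|[|?]]]]; case: (xi x l) => [|[|[|[|?]]]];
  case: (xi x (j + l)) => [|[|[|[|?]]]]; move=> r1 r2 r3 H; try lia.
by exfalso; apply: H.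
Qed.

Lemma TE_A : \sum_(1 <= j < m) (kv j).-1 = a_of x + 2 * b_of x + #|A|.
Proof.
rewrite (@big_cat_nat _ _ _ t.+1) /=; [|lia|exact: tm].
rewrite sum_rem //; last exact: tm.
rewrite -sum_pred_x // -(sum_xi x (fun v => v.-1)); congr (_ + _).
by apply: eq_big_nat => i hi; rewrite kv_first //; lia.
Qed.

End KVA.


Definition cp (x : seq nat) (i : nat) : bool :=
  has (fun j1 => has (fun j2 => [&& j1 + j2 == i, xi x j1 == 1 & xi x j2 == 1])
     (iota 1 (size x))) (iota 1 (size x)).

Lemma c_of_sum x : c_of x = \sum_(1 <= i < (size x).+1) ((xi x i == 2) && cp x i).
Proof. by rewrite /c_of count_iota_sum add1n. Qed.

Section KVA2.
Variables (n g : nat) (x : seq nat) (R : nat) (A : {set 'I_R}).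
Local Notation t := (size x).
Local Notation m := (g + 1 - n).
Hypothesis hg : 4 * n <= g + 1.
Hypothesis ht : size x = (2 * n).-1.
Hypothesis hx : all (fun v => 1 <= v <= 3) x.
Hypothesis h113 : forall i1 i2 i3 : nat, 1 <= i1 <= size x -> 1 <= i2 <= size x ->
     1 <= i3 <= size x -> i1 + i2 = i3 ->
     (xi x i1, xi x i2, xi x i3) <> (1, 1, 3).
Hypothesis hR : R = m - 1 - t.
Hypothesis hab : a_of x + 2 * b_of x <= n.
Hypothesis hA : #|A| = n - (a_of x + 2 * b_of x).
Local Notation kv := (kvA x m A).
Local Notation S := (Sk m kv).

Let mm := m0 hg ht hx hR.
Let kf := kv_first A hg ht hx hR.
Let kr := kv_rem A hg ht hx hR.
Let k1 := kv1 A hg ht hx hR.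
Let k3 := kv3 A hg ht hx hR.
Let tm' := tm hg ht hx hR.

Lemma TE : \sum_(1 <= j < m) (kv j).-1 = n.
Proof. rewrite (TE_A A hg ht hx hR); lia. Qed.

Lemma has_eq i : 0 < i <= t ->
  has (fun j => (kv j == 1) && (kv (i - j) == 1)) (iota 1 i.-1) = cp x i.
Proof.
move=> hi; apply/hasP/hasP.
  move=> [j]; rewrite mem_iota => hj /andP[/eqP e1 /eqP e2].
  exists j; first by rewrite mem_iota; lia.
  apply/hasP; exists (i - j); first by rewrite mem_iota; lia.
  rewrite -kf ?e1; last by lia.
  rewrite -(kf (i := i - j)) ?e2; last by lia.
  apply/and3P; split => //; apply/eqP; lia.
move=> [j1]; rewrite mem_iota => hj1 /hasP [j2]; rewrite mem_iota => hj2 /and3P[/eqP e h1 h2].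
exists j1; first by rewrite mem_iota; lia.
rewrite kf; last by lia.
rewrite (kf (i := i - j1)); last by lia.
have -> : i - j1 = j2 by lia.
by rewrite h1 h2.
Qed.

Lemma mg_first_i i : 0 < i <= t ->
  mingen S (kv i * m + i) + ((xi x i == 2) && cp x i) = (xi x i == 1) + (xi x i == 2).
Proof.
move=> hi; have ki := kf hi.
have rng := xi_range hx hi.
case E: (xi x i) rng => [|[|[|[|?]]]] // _.
- by rewrite ki E mg1 //; lia.
- rewrite ki E mg2 //; [|lia|by rewrite ki E].
  by rewrite has_eq //; case: (cp x i).
- rewrite ki E /= addn0; apply/eqP; rewrite eqb0; apply: (PH3 (n := n)) => //.
  + exact: TE.
  + lia.
  + by rewrite ki E.
  + lia.
Qed.

Lemma sum_first : \sum_(1 <= i < t.+1) mingen S (kv i * m + i) + c_of x =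
  count (pred1 1) x + a_of x.
Proof.
rewrite c_of_sum -big_split /=.
rewrite (eq_big_nat _ _ (F2 := fun i => (xi x i == 1) + (xi x i == 2))); last first.
  by move=> i hi; apply: mg_first_i.
rewrite (sum_xi x (fun v => (v == 1) + (v == 2))) big_split /= -!count_sum.
by [].
Qed.

Lemma sum_second : \sum_(t.+1 <= i < m) mingen S (kv i * m + i) + #|A| = R.
Proof.
rewrite -(sum_rem A hR tm') -big_split /=.
rewrite (eq_big_nat _ _ (F2 := fun i => 1)); last first.
  move=> i hi; have hi' : 0 < i < m by lia.
  rewrite (kr hi); case E: (inA A _) => /=.
  - rewrite mg2 //; last by rewrite (kr hi) E.
    rewrite (PH2 (n := n) mm) //.
    + exact: TE.
    + by rewrite (kr hi) E.
    + lia.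
  - by rewrite mg1 // (kr hi) E.
by rewrite sum_nat_const_nat muln1; lia.
Qed.

Lemma edim_A : edim_is S (count (pred1 1) x + a_of x - c_of x + (R - #|A|)).+1.
Proof.
apply: Sk_edim => //.
have := sum_first; have := sum_second.
rewrite (@big_cat_nat _ _ _ t.+1 1 m) /=; [|lia|lia].
lia.
Qed.

End KVA2.


Lemma sum_from0 m (kv : nat -> nat) : 0 < m -> kv 0 = 0 -> (forall j, 0 < j < m -> 1 <= kv j) ->
  \sum_(0 <= i < m) kv i = \sum_(1 <= j < m) (kv j).-1 + (m - 1).
Proof.
move=> m0 k0 k1; rewrite big_ltn // k0 add0n.
have -> : m - 1 = \sum_(1 <= j < m) 1 by rewrite sum_nat_const_nat muln1.
rewrite -big_split /=; apply: eq_big_nat => j hj; have := k1 j hj; lia.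
Qed.

Section KVA3.
Variables (n g : nat) (x : seq nat) (R : nat).
Local Notation t := (size x).
Local Notation m := (g + 1 - n).
Hypothesis hg : 4 * n <= g + 1.
Hypothesis ht : size x = (2 * n).-1.
Hypothesis hx : all (fun v => 1 <= v <= 3) x.
Hypothesis h113 : forall i1 i2 i3 : nat, 1 <= i1 <= size x -> 1 <= i2 <= size x ->
     1 <= i3 <= size x -> i1 + i2 = i3 ->
     (xi x i1, xi x i2, xi x i3) <> (1, 1, 3).
Hypothesis hR : R = m - 1 - t.
Hypothesis hab : a_of x + 2 * b_of x <= n.

Let mm := m0 hg ht hx hR.
Let tm' := tm hg ht hx hR.

Lemma SA_kunz (A : {set 'I_R}) i : 1 <= i <= t -> kunz_coord_is (Sk m (kvA x m A)) m i (xi x i).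
Proof.
move=> hi; have ki := kv_first A hg ht hx hR hi; have rng := xi_range hx hi.
rewrite /kunz_coord_is /apery; apply/andP; split.
  by rewrite Sk_qj ?ki //; lia.
apply/orP; right.
have -> : xi x i * m + i - m = (xi x i).-1 * m + i.
  case: (xi x i) rng => [|v] // _; rewrite mulSn; lia.
rewrite Sk_qj ?ki //; lia.
Qed.

Lemma SA_P (A : {set 'I_R}) : #|A| = n - (a_of x + 2 * b_of x) ->
  [/\ is_numsg (Sk m (kvA x m A)), genus_is (Sk m (kvA x m A)) g,
      multiplicity_is (Sk m (kvA x m A)) m,
      edim_is (Sk m (kvA x m A)) (count (pred1 1) x + a_of x - c_of x + (R - #|A|)).+1 &
      forall i : nat, 1 <= i <= size x -> kunz_coord_is (Sk m (kvA x m A)) m i (xi x i)].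
Proof.
move=> hA.
have k1 := kv1 A hg ht hx hR; have k3 := kv3 A hg ht hx hR.
split.
- apply: Sk_numsg => //; exact: (kv_kunz A hg ht hx h113 hR).
- have := Sk_genus mm k3.
  rewrite sum_from0 // (TE_A A hg ht hx hR) hA.
  have -> : a_of x + 2 * b_of x + (n - (a_of x + 2 * b_of x)) + (g + 1 - n - 1) = g by lia.
  by [].
- exact: Sk_mult.
- exact: (edim_A hg ht hx hR hab hA).
- exact: SA_kunz.
Qed.

Lemma SA_inj (A B : {set 'I_R}) : Sk m (kvA x m A) =1 Sk m (kvA x m B) -> A = B.
Proof.
move=> H; apply/setP => j.
have hj : t.+1 + j < m by have := ltn_ord j; lia.
have := H (1 * m + (t.+1 + j)); rewrite !Sk_qj //.
rewrite !(kv_rem _ hg ht hx hR); try lia.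
rewrite addKn !inA_ord.
by case: (j \in A); case: (j \in B).
Qed.

End KVA3.


Lemma inA_lt R (A : {set 'I_R}) k (P : nat -> bool) :
  A = [set j : 'I_R | P j] -> inA A k = (k < R) && P k.
Proof.
move=> ->; apply/existsP/andP => [[j /andP[]]|[kR Pk]].
  by rewrite inE => Pj /eqP <-; split => //; apply: ltn_ord.
by exists (Ordinal kR); rewrite inE Pk eqxx.
Qed.

Section SURJ.
Variables (n g : nat) (x : seq nat) (R : nat) (S : nat -> bool).
Local Notation t := (size x).
Local Notation m := (g + 1 - n).
Hypothesis hg : 4 * n <= g + 1.
Hypothesis ht : size x = (2 * n).-1.
Hypothesis hx : all (fun v => 1 <= v <= 3) x.
Hypothesis hR : R = m - 1 - t.
Hypothesis hab : a_of x + 2 * b_of x <= n.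
Hypothesis hnum : is_numsg S.
Hypothesis hgen : genus_is S g.
Hypothesis hmul : multiplicity_is S m.
Hypothesis hkz : forall i : nat, 1 <= i <= size x -> kunz_coord_is S m i (xi x i).

Let mm := m0 hg ht hx hR.
Let tm' := tm hg ht hx hR.

Lemma S0 : S 0. Proof. by case: hnum. Qed.
Lemma Sadd p q : S p -> S q -> S (p + q). Proof. by case: hnum => _ H _; apply: H. Qed.
Lemma Sm : S m. Proof. by case: hmul. Qed.

Lemma S_qm q : S (q * m).
Proof. elim: q => [|q IH]; first exact: S0. by rewrite mulSn; apply: Sadd => //; exact: Sm. Qed.

Lemma exq i : exists q, S (q * m + i).
Proof.
case: hgen => B [hB _]; exists B; apply: hB.
have := leq_pmulr B mm; lia.
Qed.

Definition w i := ex_minn (exq i).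

Lemma wP i : S (w i * m + i) /\ forall q, S (q * m + i) -> w i <= q.
Proof. by rewrite /w; case: ex_minnP. Qed.

Lemma Schar i q : S (q * m + i) = (w i <= q).
Proof.
apply/idP/idP; first by case: (wP i) => _; apply.
move=> h; have -> : q * m + i = (q - w i) * m + (w i * m + i).
  by rewrite addnA -mulnDl subnK.
apply: Sadd; [exact: S_qm | by case: (wP i)].
Qed.

Lemma S_Sk : S =1 Sk m w.
Proof. by move=> p; rewrite {1}(divn_eq p m) Schar. Qed.

Lemma w0 : w 0 = 0.
Proof. case: (wP 0) => _ /(_ 0); rewrite mul0n S0; lia. Qed.

Lemma w1 i : 0 < i < m -> 1 <= w i.
Proof.
move=> hi; case: (posnP (w i)) => // h.
case: hmul => _ _ /(_ i hi); case: (wP i) => + _; by rewrite h mul0n add0n => ->.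
Qed.

Lemma wx i : 1 <= i <= t -> w i = xi x i.
Proof.
move=> hi; have rng := xi_range hx hi.
move: (hkz hi); rewrite /kunz_coord_is /apery Schar => /andP[h1 /orP[h2|h2]].
  have := leq_pmull m (ltac:(lia) : 0 < xi x i); lia.
move: h2; have -> : xi x i * m + i - m = (xi x i).-1 * m + i.
  case: (xi x i) rng => [|v] // _; rewrite mulSn; lia.
rewrite Schar; lia.
Qed.

Lemma wB : exists B, forall i, w i <= B /\ (count (fun p => ~~ S p) (iota 0 (B * m)) = g).
Proof.
case: hgen => B [hB hc]; exists B => i; split.
  case: (wP i) => _; apply; apply: hB; have := leq_pmulr B mm; lia.
have -> : B * m = B + (B * m - B) by have := leq_pmulr B mm; lia.
rewrite iotaD count_cat hc (eq_in_count (a2 := pred0)); first by rewrite count_pred0 addn0.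
move=> p; rewrite mem_iota => hp /=; rewrite hB //; lia.
Qed.

Lemma sum_w : \sum_(0 <= i < m) w i = g.
Proof.
case: wB => B hB; have [_ hc] := hB 0.
have e1 : count (fun p => ~~ S p) (iota 0 (B * m)) = \sum_(0 <= i < m) w i.
  rewrite (eq_count (a2 := fun p => ~~ Sk m w p)); last by move=> p; rewrite /= S_Sk.
  by rewrite count_gaps // => j _; case: (hB j).
by rewrite -e1.
Qed.

Lemma TE_w : \sum_(1 <= j < m) (w j).-1 = n.
Proof.
have := sum_w; rewrite sum_from0 //; [lia | exact: w0 | exact: w1].
Qed.

Lemma w2 i : t < i < m -> w i <= 2.
Proof.
move=> hi; case: (leqP (w i) 2) => // h3.
have := PH2 mm w0 w1 TE_w (i := i) (ltac:(lia)) (ltac:(lia)) (ltac:(lia)).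
move=> /hasP [j]; rewrite mem_iota => hj /andP[/eqP e1 /eqP e2].
have : S (2 * m + i).
  have -> : 2 * m + i = (1 * m + j) + (1 * m + (i - j)) by lia.
  apply: Sadd; rewrite Schar; lia.
rewrite Schar; lia.
Qed.

Definition Aw : {set 'I_R} := [set j : 'I_R | w (t.+1 + j) == 2].

Lemma agree i : i < m -> w i = kvA x m Aw i.
Proof.
move=> im; case: (posnP i) => [->|i0]; first by rewrite w0.
case: (leqP i t) => hit.
  by rewrite wx ?(kv_first Aw hg ht hx hR) //; lia.
rewrite (kv_rem Aw hg ht hx hR); last by lia.
rewrite (inA_lt _ (P := fun j => w (t.+1 + j) == 2)) //.
have -> : t.+1 + (i - t.+1) = i by lia.
have := w1 (i := i) (ltac:(lia)); have := w2 (i := i) (ltac:(lia)).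
have -> : i - t.+1 < R by lia.
case: (w i =P 2) => /=; lia.
Qed.

Lemma S_SA : S =1 Sk m (kvA x m Aw).
Proof.
move=> p; rewrite S_Sk /Sk agree //.
by rewrite ltn_mod.
Qed.

Lemma card_Aw : #|Aw| = n - (a_of x + 2 * b_of x).
Proof.
rewrite -(sum_rem Aw hR tm').
have := TE_w; rewrite (@big_cat_nat _ _ _ t.+1 1 m) /=; [|lia|lia].
rewrite (eq_big_nat _ _ (F1 := fun i => (w i).-1) (F2 := fun i => (xi x i).-1)); last first.
  by move=> i hi; rewrite wx //; lia.
rewrite (sum_xi x (fun v => v.-1)) sum_pred_x //.
rewrite (eq_big_nat _ _ (F1 := fun i => (w i).-1) (F2 := fun i => (kvA x m Aw i).-1)); last first.
  by move=> i hi; rewrite agree //; lia.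
lia.
Qed.

End SURJ.


Lemma c_of_le x : c_of x <= a_of x.
Proof.
rewrite c_of_sum /a_of count_sum -(sum_xi x (fun v => v == 2)).
by apply: leq_sum => i _; case: (xi x i == 2); case: (cp x i).
Qed.

Lemma main_nat (n n2 g : nat) (x : seq nat) :
  4 * n <= g + 1 -> size x = (2 * n).-1 -> all (fun v => 1 <= v <= 3) x ->
  (forall i1 i2 i3 : nat, 1 <= i1 <= size x -> 1 <= i2 <= size x ->
     1 <= i3 <= size x -> i1 + i2 = i3 ->
     (xi x i1, xi x i2, xi x i3) <> (1, 1, 3)) ->
  a_of x + 2 * b_of x <= n ->
  a_of x + b_of x + n2 = 2 * n + c_of x ->
  num_sat (fun S => [/\ is_numsg S, genus_is S g, multiplicity_is S (g + 1 - n),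
                        edim_is S (g + 1 - n2) &
                        forall i : nat, 1 <= i <= size x ->
                          kunz_coord_is S (g + 1 - n) i (xi x i)])
     'C(g + 1 - n - 1 - size x, n - (a_of x + 2 * b_of x)).
Proof.
move=> hg ht hx h113 hab hrel.
set R := g + 1 - n - 1 - size x.
have hR : R = g + 1 - n - 1 - size x by [].
set r := n - (a_of x + 2 * b_of x).
set D := [set A : {set 'I_R} | #|A| == r].
have eN : 'C(R, r) = #|D| by rewrite card_draws card_ord.
pose f := fun i : 'I_('C(R, r)) => Sk (g + 1 - n) (kvA x (g + 1 - n) (enum_val (cast_ord eN i))).
have c1 := count_x123 hx; have c2 := c_of_le x.
exists f; split.
- move=> i; have := enum_valP (cast_ord eN i); rewrite inE => /eqP hA.
  have [P1 P2 P3 P4 P5] := SA_P hg ht hx h113 hR hab hA.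
  split => //; move: P4; rewrite hA.
  have -> : (count (pred1 1) x + a_of x - c_of x + (R - r)).+1 = g + 1 - n2.
    rewrite /r hR; lia.
  by [].
- move=> i j H; apply: (cast_ord_inj (eq_n := eN)); apply: enum_val_inj.
  exact: (SA_inj hg ht hx hR).
- move=> S [hnum hgen hmul hedim hkz].
  have AD : Aw hg ht hx hR hab hgen \in D.
    by rewrite inE (card_Aw hg ht hx hR hab hnum hgen hmul hkz).
  exists (cast_ord (esym eN) (enum_rank_in AD (Aw hg ht hx hR hab hgen))).
  move=> p; rewrite /f cast_ordKV enum_rankK_in //.
  by rewrite (S_SA hg ht hx hR hab hnum hgen hmul hkz).
Qed.

Unset Implicit Arguments. Set Strict Implicit.

Import Order.TTheory GRing.Theory Num.Theory.
Local Open Scope ring_scope.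

Theorem proposition8p7 (k1 k2 : int) (g : nat) (x : seq nat) :
  -1 <= k1 -> k1 <= k2 -> 4 * k1 + 3 <= g%:Z ->
  (size x)%:Z = Num.max 0 (2 * k1 + 1) ->
  all (fun v => (1 <= v <= 3)%N) x ->
  (forall i1 i2 i3 : nat, (1 <= i1 <= size x)%N -> (1 <= i2 <= size x)%N ->
     (1 <= i3 <= size x)%N -> (i1 + i2 = i3)%N ->
     (xi x i1, xi x i2, xi x i3) <> (1%N, 1%N, 3%N)) ->
  (a_of x)%:Z + (b_of x)%:Z - (c_of x)%:Z = 2 * k1 + 1 - k2 ->
  ((a_of x + 2 * b_of x)%N)%:Z <= k1 + 1 ->
  num_sat (fun S => [/\ is_numsg S, genus_is S g,
                        multiplicity_is S (absz (g%:Z - k1)%R),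
                        edim_is S (absz (g%:Z - k2)%R) &
                        forall i : nat, (1 <= i <= size x)%N ->
                          kunz_coord_is S (absz (g%:Z - k1)%R) i (xi x i)])
          'C(absz (g%:Z - 3 * k1 - 2)%R, absz (k1 + 1 - (a_of x)%:Z - 2 * (b_of x)%:Z)%R).
Proof.
move=> hk1 hk12 hg hsz hx h113 hrel hab.
have [n ek1] : exists n : nat, k1 = n%:Z - 1.
  by exists (absz (k1 + 1)); rewrite gez0_abs; [rewrite addrK | lia].
have [n2 ek2] : exists n2 : nat, k2 = n2%:Z - 1.
  by exists (absz (k2 + 1)); rewrite gez0_abs; [rewrite addrK | lia].
subst k1 k2.
have hg' : (4 * n <= g + 1)%N by lia.
have ht : size x = (2 * n).-1.
  move: hsz; case: (leP 0 (2 * (n%:Z - 1) + 1)) => h; lia.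
have hab' : (a_of x + 2 * b_of x <= n)%N by lia.
have hrel' : (a_of x + b_of x + n2 = 2 * n + c_of x)%N by lia.
have cle := c_of_le x.
have -> : absz (g%:Z - (n%:Z - 1))%R = (g + 1 - n)%N.
  have -> : (g%:Z - (n%:Z - 1)) = ((g + 1 - n)%N)%:Z by lia.
  by [].
have -> : absz (g%:Z - (n2%:Z - 1))%R = (g + 1 - n2)%N.
  have -> : (g%:Z - (n2%:Z - 1)) = ((g + 1 - n2)%N)%:Z by lia.
  by [].
have -> : absz ((n%:Z - 1) + 1 - (a_of x)%:Z - 2 * (b_of x)%:Z)%R = (n - (a_of x + 2 * b_of x))%N.
  have -> : ((n%:Z - 1) + 1 - (a_of x)%:Z - 2 * (b_of x)%:Z) = ((n - (a_of x + 2 * b_of x))%N)%:Z by lia.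
  by [].
have := main_nat hg' ht hx h113 hab' hrel'.
case: (posnP n) => [n0|n0].
  by rewrite n0 sub0n !bin0.
have -> : absz (g%:Z - 3 * (n%:Z - 1) - 2)%R = (g + 1 - n - 1 - size x)%N.
  have -> : (g%:Z - 3 * (n%:Z - 1) - 2) = ((g + 1 - n - 1 - size x)%N)%:Z by lia.
  by [].
by [].
Qed.
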